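(* Let $A_1,A_2,A_3$ be finite subsets of $\mathbb{R}$ with $|A_1|\le|A_2|\le|A_3|$. Let $\mathcal{L}$ be the set of lines $l$ in $\mathbb{R}^2$ that contain three distinct points $u_1,u_2,u_3$ with $u_i\in A_i\times A_i$ ($i=1,2,3$). For $l\in\mathcal{L}$ put $\alpha_{i,l}=|l\cap(A_i\times A_i)|$, and let $\mathcal{L}_{i,2}=\{l\in\mathcal{L}:\alpha_{i,l}\ge 2\}$. Then for every $i\in\{1,2,3\}$ and every real $1\le p\le 3$, \[ \sum_{l\in\mathcal{L}_{i,2}}\alpha_{i,l}^{\,p}\lesssim |A_1|^{3-p}|A_i|^{p+1}. \]
   Context: Notation: $X\lesssim Y$ means $X\le C\,Y(\log(2+N))^{c}$ for some absolute constants $C,c>0$, where $N$ is the largest cardinality of the finite sets in the statement. *)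

(* Defs.v *)
From HB Require Import structures.
From mathcomp Require Import all_boot all_order all_algebra.
From mathcomp Require Import finmap.
From mathcomp Require Import all_classical all_reals all_analysis.
Set Implicit Arguments. Unset Strict Implicit. Unset Printing Implicit Defensive.
Import Order.TTheory GRing.Theory Num.Theory.
Local Open Scope classical_set_scope.
Local Open Scope ring_scope.

Section Defs.
Variable R : realType.

Definition is_line (l : set (R * R)) : Prop :=
  exists a b c : R, (a != 0 \/ b != 0) /\ l = [set u | a * u.1 + b * u.2 = c].

Definition sqset (A : {fset R}) : set (R * R) := [set u | u.1 \in A /\ u.2 \in A].

Definition alpha (A : {fset R}) (l : set (R * R)) : nat :=
  #|` [fset u in fsetM A A | `[< l u >]]%fset |.

Definition rich_lines (A1 A2 A3 : {fset R}) : set (set (R * R)) :=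
  [set l | is_line l /\ exists u1 u2 u3 : R * R,
     [/\ sqset A1 u1, sqset A2 u2, sqset A3 u3,
         [/\ l u1, l u2 & l u3] &
         [/\ u1 != u2, u1 != u3 & u2 != u3]]].

Definition lines_i2 (A1 A2 A3 Ai : {fset R}) : set (set (R * R)) :=
  [set l | rich_lines A1 A2 A3 l /\ (2 <= alpha Ai l)%N].

End Defs.

(* Main.v *)
Require Import Defs.
From HB Require Import structures.
From mathcomp Require Import all_boot all_order all_algebra.
From mathcomp Require Import finmap.
From mathcomp Require Import all_classical all_reals all_analysis.
Import Order.TTheory GRing.Theory Num.Theory.
Local Open Scope classical_set_scope.
Local Open Scope ring_scope.

From mathcomp Require Import ring lra zify.

Section PA.
Variable R : realType.

Lemma tangent_ineq (z s : R) : 0 < z -> 0 < s -> (3 * s - 2 * z) / s ^+ 3 <= (z ^+ 2)^-1.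
Proof.
move=> z0 s0; rewrite -subr_ge0.
have -> : (z ^+ 2)^-1 - (3 * s - 2 * z) / s ^+ 3 = (s - z) ^+ 2 * (s + 2 * z) / (z ^+ 2 * s ^+ 3).
  by field; rewrite !gt_eqF.
apply: divr_ge0; last by apply: mulr_ge0; apply: exprn_ge0; apply: ltW.
apply: mulr_ge0; first exact: sqr_ge0.
by apply: addr_ge0; [apply: ltW| apply: mulr_ge0 => //; apply: ltW].
Qed.

Lemma sum_inv_sq (k : nat) (z : nat -> R) : (0 < k)%N -> (forall t, 0 < z t) ->
  k%:R ^+ 3 / (\sum_(t < k) z t) ^+ 2 <= \sum_(t < k) (z t ^+ 2)^-1.
Proof.
move=> k0 zp.
set S := \sum_(t < k) z t.
have S0 : 0 < S.
  rewrite /S; move: k0; clear S; case: k => // k _; rewrite big_ord_recl.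
  by apply: ltr_pwDl => //; apply: sumr_ge0 => i _; apply: ltW.
have k0' : 0 < k%:R :> R by rewrite ltr0n.
set s := S / k%:R.
have s0 : 0 < s by apply: divr_gt0.
apply: (@le_trans _ _ (\sum_(t < k) (3 * s - 2 * z t) / s ^+ 3)); last first.
  by apply: ler_sum => t _; apply: tangent_ineq.
rewrite -mulr_suml sumrB -mulr_sumr sumr_const card_ord.
rewrite -/S -mulr_sumr -/S -mulr_natr /s.
rewrite le_eqVlt; apply/orP; left; apply/eqP; field.
by rewrite !gt_eqF.
Qed.


Lemma inv_prod_ge (a b : R) : 0 <= a -> 0 <= b ->
  4 * ((a + b + 2) ^+ 2)^-1 <= ((a + 1) * (b + 1))^-1.
Proof.
move=> a0 b0.
have P0 : 0 < (a + 1) * (b + 1) by apply: mulr_gt0; lra.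
have z0 : 0 < (a + b + 2) ^+ 2 by apply: exprn_gt0; lra.
rewrite ler_pdivrMr // ler_pdivlMl //.
have := sqr_ge0 (a - b); nra.
Qed.

Lemma Fge (k : nat) (F : nat -> nat) : (forall t, (t < k)%N -> (F t < F t.+1)%N) ->
  forall t, (t <= k)%N -> (t <= F t)%N.
Proof.
move=> Fi; elim=> // t IH tk.
have := Fi t tk; have := IH (ltnW tk); lia.
Qed.

Lemma consec (n k : nat) (F G : nat -> nat) :
 (forall t, (t < k)%N -> (F t < F t.+1)%N) ->
 ((forall t, (t < k)%N -> (G t <= G t.+1)%N) \/ (forall t, (t < k)%N -> (G t.+1 <= G t)%N)) ->
 (forall t, (t <= k)%N -> (F t < n)%N /\ (G t < n)%N) ->
 k%:R ^+ 3 <= 4 * n%:R ^+ 2 * \sum_(t < k) ((`|(F t.+1)%:R - (F t)%:R| + 1) * (`|(G t.+1)%:R - (G t)%:R| + 1))^-1 :> R.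
Proof.
move=> Fi Gm Fn.
case: (posnP k) => [->|k0]; first by rewrite big_ord0 mulr0 expr0n.
have [Fkn Gkn] := Fn k (leqnn k).
have kn : (k < n)%N by have := @Fge k F Fi k (leqnn k); lia.
have n0 : 0 < n%:R :> R by rewrite ltr0n; lia.
pose a t : R := `|(F t.+1)%:R - (F t)%:R|.
pose b t : R := `|(G t.+1)%:R - (G t)%:R|.
pose z t := a t + b t + 2.
have zp : forall t, 0 < z t by move=> t; rewrite /z /a /b; apply: ltr_wpDl; [apply: addr_ge0|]; rewrite ?normr_ge0 //.
have Sa : \sum_(t < k) a t <= n%:R.
  have -> : \sum_(t < k) a t = \sum_(t < k) ((F t.+1)%:R - (F t)%:R).
    apply: eq_bigr => t _; rewrite /a ger0_norm // subr_ge0 ler_nat ltnW //; exact: Fi.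
  rewrite -(big_mkord xpredT (fun t => (F t.+1)%:R - (F t)%:R)) telescope_sumr //.
  rewrite lerBlDr; apply: ler_wpDr => //; rewrite ler_nat; exact: ltnW.
have Sb : \sum_(t < k) b t <= n%:R.
  case: Gm => Gm.
    have -> : \sum_(t < k) b t = \sum_(t < k) ((G t.+1)%:R - (G t)%:R).
      apply: eq_bigr => t _; rewrite /b ger0_norm // subr_ge0 ler_nat; exact: Gm.
    rewrite -(big_mkord xpredT (fun t => (G t.+1)%:R - (G t)%:R)) telescope_sumr //.
    rewrite lerBlDr; apply: ler_wpDr => //; rewrite ler_nat; exact: ltnW.
  have -> : \sum_(t < k) b t = - \sum_(t < k) ((G t.+1)%:R - (G t)%:R).
    rewrite -sumrN; apply: eq_bigr => t _; rewrite /b ler0_norm // subr_le0 ler_nat; exact: Gm.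
  rewrite -(big_mkord xpredT (fun t => (G t.+1)%:R - (G t)%:R)) telescope_sumr //.
  rewrite opprB lerBlDr; apply: ler_wpDr => //; rewrite ler_nat; exact: ltnW (Fn 0 (leq0n _)).2.
have Sz : \sum_(t < k) z t <= 4 * n%:R.
  rewrite /z !big_split /= sumr_const card_ord.
  have : k%:R <= n%:R :> R by rewrite ler_nat ltnW.
  rewrite -mulr_natr; lra.
have Sz0 : 0 < \sum_(t < k) z t.
  apply: (lt_le_trans (zp 0%N)); rewrite (bigD1 (Ordinal k0)) //= lerDl.
  by apply: sumr_ge0 => i _; apply: ltW.
have c0 : 0 < 4 * n%:R ^+ 2 :> R by apply: mulr_gt0 => //; apply: exprn_gt0.
apply: (@le_trans _ _ (4 * n%:R ^+ 2 * (4 * (k%:R ^+ 3 / (\sum_(t < k) z t) ^+ 2)))).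
  apply: (@le_trans _ _ (4 * n%:R ^+ 2 * (4 * (k%:R ^+ 3 / (4 * n%:R) ^+ 2)))).
    by rewrite le_eqVlt; apply/orP; left; apply/eqP; field; rewrite gt_eqF.
  rewrite ler_pM2l // ler_pM2l // ler_pM2l; last by apply: exprn_gt0; rewrite ltr0n.
  rewrite lef_pV2 ?posrE ?exprn_gt0 //; last by apply: mulr_gt0.
  rewrite lerXn2r // nnegrE; [exact: ltW| apply: mulr_ge0 => //; exact: ltW].
rewrite ler_pM2l //.
apply: (@le_trans _ _ (4 * \sum_(t < k) (z t ^+ 2)^-1)).
  by rewrite ler_pM2l //; apply: sum_inv_sq.
rewrite mulr_sumr; apply: ler_sum => t _.
by apply: inv_prod_ge; apply: normr_ge0.
Qed.


Lemma harm_le (n : nat) : \sum_(k < n) (k.+1%:R)^-1 <= 3 * ln (2 + n%:R) :> R.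
Proof.
elim: n => [|n IH].
  rewrite big_ord0; apply: mulr_ge0 => //; apply: ln_ge0; lra.
rewrite big_ord_recr /=.
have key : (n.+1%:R)^-1 <= 3 * (ln (2 + n.+1%:R) - ln (2 + n%:R)) :> R.
  have h1 : ln (1 + - (n.+3%:R)^-1) <= - (n.+3%:R)^-1 :> R.
    apply: le_ln1Dx; rewrite ltrNl opprK invf_lt1 ?ltr0n // ltr1n //.
  have e1 : 1 + - (n.+3%:R)^-1 = (2 + n%:R) * (2 + n.+1%:R)^-1 :> R.
    rewrite -[n.+3]addn3 -[n.+1]addn1 !natrD; field.
    by apply: lt0r_neq0; have := ler0n R n; lra.
  have q1 : (2 + n%:R : R) \is Num.pos by rewrite posrE; have := ler0n R n; lra.
  have q2 : (2 + n.+1%:R : R) \is Num.pos by rewrite posrE; have := ler0n R n.+1; lra.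
  have q3 : (2 + n.+1%:R : R)^-1 \is Num.pos by rewrite posrE invr_gt0 -posrE.
  rewrite e1 (lnM q1 q3) (lnV q2) in h1.
  have e2 : (2 + n.+1%:R : R) = n.+3%:R by rewrite -[n.+3]addn2 natrD addrC.
  rewrite e2 in h1 *.
  have h2 : (n.+1%:R)^-1 <= 3 * (n.+3%:R)^-1 :> R.
    rewrite -(mul1r (n.+1%:R)^-1) ler_pdivrMr ?ltr0n // mulrAC ler_pdivlMr ?ltr0n // mul1r -natrM ler_nat; lia.
  move: h1 h2; set y := (n.+3%:R)^-1; set w := (n.+1%:R)^-1; set u := ln _; set v := ln _; move=> h1 h2; clearbody y w u v; lra.
move: IH key; set w := (n.+1%:R)^-1; set u := ln _; set v := ln _; set S := \sum_(_ < _) _; move=> IH key; clearbody w u v S; lra.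
Qed.

Lemma pow_interp (x T p : R) : 0 <= x -> 0 < T -> 1 <= p -> p <= 3 ->
  x `^ p <= T `^ (p - 1) * x + T `^ (p - 3) * x ^+ 3.
Proof.
move=> x0 T0 p1 p3.
have rhs0 : 0 <= T `^ (p - 1) * x + T `^ (p - 3) * x ^+ 3.
  by apply: addr_ge0; apply: mulr_ge0; rewrite ?powR_ge0 ?exprn_ge0.
case: (eqVneq x 0) => [xe|xn0].
  have pn0 : p != 0 by apply/eqP => e; lra.
  by rewrite {1}xe powR0.
have xp : 0 < x by rewrite lt_neqAle eq_sym xn0.
case: (lerP x T) => xT.
  have -> : x `^ p = x `^ (p - 1) * x.
    by rewrite -{3}(powRr1 x0) -powRD ?xn0 ?implybT // subrK.
  apply: (@le_trans _ _ (T `^ (p - 1) * x)); last first.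
    by rewrite lerDl; apply: mulr_ge0; rewrite ?powR_ge0 ?exprn_ge0.
  rewrite ler_pM2r //; apply: ge0_ler_powR => //; rewrite ?nnegrE; lra.
have -> : x `^ p = x `^ (p - 3) * x ^+ 3.
  rewrite -powR_mulrn // -powRD ?xn0 ?implybT //; congr (_ `^ _); rewrite /=; lra.
apply: (@le_trans _ _ (T `^ (p - 3) * x ^+ 3)); last first.
  by rewrite lerDr; apply: mulr_ge0; rewrite ?powR_ge0 ?exprn_ge0.
rewrite ler_pM2r ?exprn_gt0 //.
have -> : p - 3 = - (3 - p) by rewrite opprB.
rewrite !powRN lef_pV2 ?posrE ?powR_gt0 //.
apply: ge0_ler_powR; rewrite ?nnegrE; lra.
Qed.


Lemma powR_addn (a r s : R) : 0 < a -> a `^ r * a `^ s = a `^ (r + s).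
Proof. by move=> a0; rewrite powRD //; apply/implyP => _; rewrite gt_eqF. Qed.

Lemma powR_invb (a r : R) : 0 < a -> (a^-1) `^ r = a `^ (- r).
Proof.
move=> a0; rewrite -powR_inv1 ?ltW // -powRrM; congr (_ `^ _); ring.
Qed.

Lemma ident1 (a b p : R) : 0 < a -> 0 < b ->
  (b / a) `^ (p - 1) * (a ^+ 2 * b ^+ 2) = a `^ (3 - p) * b `^ (p + 1).
Proof.
move=> a0 b0.
rewrite powRM ?invr_ge0 ?ltW // powR_invb //.
rewrite -!(powR_mulrn 2) ?ltW //.
have -> : b `^ (p - 1) * a `^ (- (p - 1)) * (a `^ 2%:R * b `^ 2%:R)
   = (a `^ (- (p - 1)) * a `^ 2%:R) * (b `^ (p - 1) * b `^ 2%:R) by ring.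
rewrite !powR_addn //; congr (_ `^ _ * _ `^ _); rewrite /=; lra.
Qed.

Lemma ident2 (a b p : R) : 0 < a -> 0 < b ->
  (b / a) `^ (p - 3) * b ^+ 4 = a `^ (3 - p) * b `^ (p + 1).
Proof.
move=> a0 b0.
rewrite powRM ?invr_ge0 ?ltW // powR_invb //.
rewrite -(powR_mulrn 4) ?ltW //.
have -> : b `^ (p - 3) * a `^ (- (p - 3)) * b `^ 4%:R
   = a `^ (- (p - 3)) * (b `^ (p - 3) * b `^ 4%:R) by ring.
rewrite !powR_addn //; congr (_ `^ _ * _ `^ _); rewrite /=; lra.
Qed.

End PA.

Set Implicit Arguments. Unset Strict Implicit.

Section PC.
Variable R : realType.
Implicit Types l : set (R * R).

Lemma line_char (l : set (R * R)) (u v : R * R) : is_line l -> l u -> l v -> u != v ->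
  forall w, l w <-> (w.1 - u.1) * (v.2 - u.2) = (w.2 - u.2) * (v.1 - u.1).
Proof.
move=> [a [b [c [hab ->]]]] /= hu hv uv w /=.
have hd : a * (v.1 - u.1) + b * (v.2 - u.2) = 0 by rewrite !mulrBr; lra.
have dn : (v.1 - u.1 != 0) \/ (v.2 - u.2 != 0).
  case: (eqVneq (v.1 - u.1) 0) => d1; last by left.
  case: (eqVneq (v.2 - u.2) 0) => d2; last by right.
  exfalso; move/negP: uv; apply; apply/eqP.
  by move: d1 d2; case: u {hu hd} => u1 u2; case: v {hv} => v1 v2 /= /eqP; rewrite subr_eq0 => /eqP -> /eqP; rewrite subr_eq0 => /eqP ->.
move: hd dn; set d1 := v.1 - u.1; set d2 := v.2 - u.2.
have -> : (a * w.1 + b * w.2 = c) <-> (a * (w.1 - u.1) + b * (w.2 - u.2) = 0).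
  by rewrite !mulrBr; split => H; lra.
set e1 := w.1 - u.1; set e2 := w.2 - u.2.
move=> hd dn; split => H.
  case: (eqVneq a 0) => a0.
    have b0 : b != 0 by case: hab => //; rewrite a0 eqxx.
    move: hd H; rewrite a0 !mul0r !add0r => /eqP; rewrite mulf_eq0 (negbTE b0) /= => /eqP ->.
    by move/eqP; rewrite mulf_eq0 (negbTE b0) /= => /eqP ->; rewrite !mulr0 mul0r.
  have : a * (e1 * d2 - e2 * d1) = 0.
    have -> : a * (e1 * d2 - e2 * d1) = d2 * (a * e1 + b * e2) - e2 * (a * d1 + b * d2) by ring.
    by rewrite H hd !mulr0 subr0.
  by move/eqP; rewrite mulf_eq0 (negbTE a0) /= subr_eq0 => /eqP.
case: dn => dn.
  have : (a * e1 + b * e2) * d1 = 0.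
    have -> : (a * e1 + b * e2) * d1 = e1 * (a * d1 + b * d2) + b * (e2 * d1 - e1 * d2) by ring.
    by rewrite hd H subrr !mulr0 addr0.
  by move/eqP; rewrite mulf_eq0 (negbTE dn) orbF => /eqP.
have : (a * e1 + b * e2) * d2 = 0.
  have -> : (a * e1 + b * e2) * d2 = a * (e1 * d2 - e2 * d1) + e2 * (a * d1 + b * d2) by ring.
  by rewrite hd H subrr !mulr0 addr0.
by move/eqP; rewrite mulf_eq0 (negbTE dn) orbF => /eqP.
Qed.

Lemma line_unique (l l' : set (R * R)) (u v : R * R) : is_line l -> is_line l' ->
  l u -> l v -> l' u -> l' v -> u != v -> l = l'.
Proof.
move=> hl hl' lu lv lu' lv' uv; apply/funext => w; apply/propext.
by rewrite (propext (line_char hl lu lv uv w)) (propext (line_char hl' lu' lv' uv w)).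
Qed.

Lemma line_param (l : set (R * R)) : is_line l ->
  (exists phi : R -> R, ((forall x y, x <= y -> phi x <= phi y) \/ (forall x y, x <= y -> phi y <= phi x))
     /\ forall u, l u -> u.2 = phi u.1)
  \/ (exists x0, forall u, l u -> u.1 = x0).
Proof.
move=> [a [b [c [hab ->]]]].
case: (eqVneq b 0) => b0.
  right; exists (c / a) => u /=; rewrite b0 mul0r addr0 => <-.
  have a0 : a != 0 by case: hab => //; rewrite b0 eqxx.
  by rewrite mulrAC divff // mul1r.
left; exists (fun x => (c - a * x) / b); split; last first.
  by move=> u /= <-; rewrite addrC addKr mulrC mulKf.
have ephi : forall x, (c - a * x) / b = c / b - (a / b) * x.
  by move=> x; rewrite mulrBl mulrAC.
case: (lerP 0 (a / b)) => s.
  right => x y xy; rewrite !ephi lerB //; exact: ler_wpM2l.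
left => x y xy; rewrite !ephi lerB //; apply: ler_wnM2l => //; exact: ltW.
Qed.


Definition onl l (u : R * R) : bool := `[< l u >].
Definition sq (A : {fset R}) : seq (R * R) := [seq (a, b) | a <- A, b <- A].

Lemma mem_sq A u : (u \in sq A) = (u.1 \in A) && (u.2 \in A).
Proof.
case: u => a b /=; apply/allpairsP/andP => [[[x y] /= [xA yA [-> ->]]] //|[aA bA]].
by exists (a, b).
Qed.

Lemma sq_uniq A : uniq (sq A).
Proof.
apply: allpairs_uniq; rewrite ?fset_uniq //.
by move=> [x1 x2] [y1 y2] _ _ /= [-> ->].
Qed.

Lemma alpha_count A l : alpha A l = count (onl l) (sq A).
Proof.
rewrite /alpha.
have -> : [fset u in (A `*` A)%fset | `[< l u >]]%fset = [fset x in seq.filter (onl l) (sq A)]%fset.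
  apply/fsetP => u; rewrite !inE mem_filter mem_sq /onl andbC.
  by [].
by rewrite card_fseq undup_id ?filter_uniq ?sq_uniq // size_filter.
Qed.

Lemma sum_sub_uniq (T : eqType) (s D : seq T) (F : T -> R) :
  uniq s -> uniq D -> {subset s <= D} -> (forall x, x \in D -> 0 <= F x) ->
  \sum_(x <- s) F x <= \sum_(x <- D) F x.
Proof.
move=> us uD sD F0.
rewrite [X in _ <= X](bigID (fun x => x \in s)) /=.
have -> : \sum_(x <- s) F x = \sum_(x <- D | x \in s) F x.
  rewrite -[RHS]big_filter; apply: perm_big; apply: uniq_perm => //; first exact: filter_uniq.
  by move=> x; rewrite mem_filter; case: (boolP (x \in s)) => // /sD ->.
rewrite lerDl big_seq_cond; apply: sumr_ge0 => x /andP [xD _]; exact: F0.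
Qed.

Lemma count_lines (L : seq (set (R * R))) (u v : R * R) (g : R) :
  uniq L -> (forall l, l \in L -> is_line l) -> u != v -> 0 <= g ->
  \sum_(l <- L) (if onl l u && onl l v then g else 0) <= g.
Proof.
move=> uL Ll uv g0.
rewrite -big_mkcond /=.
case: (boolP (has (fun l => onl l u && onl l v) L)) => [/hasP [l0 l0L /andP [l0u l0v]]|/hasPn hn].
  have -> : \sum_(l <- L | onl l u && onl l v) g = \sum_(l <- L | l == l0) g.
    rewrite big_seq_cond [RHS]big_seq_cond; apply: eq_bigl => l.
    case lL: (l \in L) => //=; apply/idP/eqP => [/andP [lu lv]| ->]; last by rewrite l0u l0v.
    move: lu lv l0u l0v; rewrite /onl => /asboolP lu /asboolP lv /asboolP l0u /asboolP l0v.
    exact: (line_unique (Ll l lL) (Ll l0 l0L) lu lv l0u l0v uv).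
  by rewrite -big_filter (filter_pred1_uniq uL l0L) big_seq1.
rewrite big_seq_cond big1 // => l /andP [lL Pl].
by move: (hn l lL); rewrite Pl.
Qed.


Lemma exch (L : seq (set (R * R))) (P1 P2 : seq (R * R)) (G : R * R -> R * R -> R) :
  uniq L -> (forall l, l \in L -> is_line l) -> (forall u v, 0 <= G u v) ->
  \sum_(l <- L) \sum_(u <- P1) \sum_(v <- P2)
     (if (u != v) && onl l u && onl l v then G u v else 0)
  <= \sum_(u <- P1) \sum_(v <- P2) (if u != v then G u v else 0).
Proof.
move=> uL Ll G0.
rewrite exchange_big; apply: ler_sum => u _.
rewrite exchange_big; apply: ler_sum => v _.
case: (eqVneq u v) => uv /=.
  by rewrite big1 // => l _; rewrite andFb.
have -> : \sum_(l <- L) (if true && onl l u && onl l v then G u v else 0) =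
          \sum_(l <- L) (if onl l u && onl l v then G u v else 0) by [].
exact: count_lines.
Qed.

Definition rk (A : {fset R}) (x : R) : nat := #|` [fset y in A | y < x]%fset|.

Lemma rk_lt A x : x \in A -> (rk A x < #|` A|)%N.
Proof.
move=> xA; apply: fproper_ltn_card; rewrite fproperEneq; apply/andP; split.
  apply/negP => /eqP e; have : x \in [fset y in A | y < x]%fset by rewrite e.
  by rewrite !inE ltxx andbF.
by apply/fsubsetP => y; rewrite !inE => /andP [].
Qed.

Lemma rk_le A x y : x <= y -> (rk A x <= rk A y)%N.
Proof.
move=> xy; apply: fsubset_leq_card; apply/fsubsetP => z; rewrite !inE => /andP [-> zx] /=.
exact: lt_le_trans zx xy.
Qed.

Lemma rk_ltr A x y : x \in A -> x < y -> (rk A x < rk A y)%N.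
Proof.
move=> xA xy; apply: fproper_ltn_card; rewrite fproperEneq; apply/andP; split.
  apply/negP => /eqP e; have : x \in [fset z in A | z < y]%fset by rewrite !inE xA xy.
  by rewrite -e !inE ltxx andbF.
apply/fsubsetP => z; rewrite !inE => /andP [-> zx] /=.
exact: lt_trans zx xy.
Qed.


Definition dst (A : {fset R}) (a b : R) : R := `|(rk A a)%:R - (rk A b)%:R|.
Definition W (A : {fset R}) (u v : R * R) : R := ((dst A u.1 v.1 + 1) * (dst A u.2 v.2 + 1))^-1.

Lemma W_ge0 A u v : 0 <= W A u v.
Proof. by rewrite /W invr_ge0; apply: mulr_ge0; apply: addr_ge0; rewrite ?normr_ge0. Qed.

Lemma gen_lower (A : {fset R}) l (pi : R * R -> R) (e : R -> R * R) (h : R -> R) :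
  (forall u, u \in sq A -> onl l u -> e (pi u) = u) ->
  (forall x, pi (e x) = x) ->
  ((forall x y, x <= y -> h x <= h y) \/ (forall x y, x <= y -> h y <= h x)) ->
  (forall u, u \in sq A -> onl l u -> pi u \in A /\ h (pi u) \in A) ->
  (forall x y, W A (e x) (e y) = ((dst A x y + 1) * (dst A (h x) (h y) + 1))^-1) ->
  (1 <= alpha A l)%N ->
  ((alpha A l)%:R - 1) ^+ 3 <= 4 * (#|` A|%:R) ^+ 2 *
    \sum_(u <- sq A) \sum_(v <- sq A) (if (u != v) && onl l u && onl l v then W A u v else 0).
Proof.
move=> epi pie hm inA We a1.
set S := seq.filter (onl l) (sq A).
have memS : forall u, (u \in S) = (u \in sq A) && onl l u.
  by move=> u; rewrite mem_filter andbC.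
have uS : uniq S by apply: filter_uniq; apply: sq_uniq.
have sS : size S = alpha A l by rewrite alpha_count size_filter.
set X := [seq pi u | u <- S].
have uX : uniq X.
  rewrite map_inj_in_uniq // => u v; rewrite !memS => /andP [u1 u2] /andP [v1 v2] e1.
  by rewrite -(epi u u1 u2) -(epi v v1 v2) e1.
set xs := sort <=%O X.
have sxs : size xs = alpha A l by rewrite size_sort size_map.
have uxs : uniq xs by rewrite sort_uniq.
have ltxs : sorted <%O xs by rewrite lt_sorted_uniq_le uxs sort_sorted //; exact: le_total.
set k := (alpha A l).-1.
have ka : alpha A l = k.+1 by rewrite /k prednK.
have ptP : forall t, (t < alpha A l)%N ->
   [/\ e (nth 0 xs t) \in sq A, onl l (e (nth 0 xs t)), nth 0 xs t \in A & h (nth 0 xs t) \in A].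
  move=> t ta.
  have : nth 0 xs t \in X by rewrite -(mem_sort <=%O) mem_nth // sxs.
  case/mapP => u; rewrite memS => /andP [u1 u2] ->.
  by rewrite (epi u u1 u2); case: (inA u u1 u2) => ??; split.
have ltnth : forall t, (t < k)%N -> nth 0 xs t < nth 0 xs t.+1.
  move=> t tk; rewrite lt_sorted_ltn_nth // inE sxs ka; lia.
pose F t := rk A (nth 0 xs t).
pose G t := rk A (h (nth 0 xs t)).
have := @consec R #|` A| k F G.
have c1 : forall t, (t < k)%N -> (F t < F t.+1)%N.
  move=> t tk; apply: rk_ltr; last exact: ltnth.
  by case: (ptP t ltac:(lia)).
have c2 : (forall t, (t < k)%N -> (G t <= G t.+1)%N) \/ (forall t, (t < k)%N -> (G t.+1 <= G t)%N).
  case: hm => hm; [left|right] => t tk; apply: rk_le; apply: hm; apply: ltW; exact: ltnth.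
have c3 : forall t, (t <= k)%N -> (F t < #|` A|)%N /\ (G t < #|` A|)%N.
  move=> t tk; case: (ptP t ltac:(lia)) => _ _ h1 h2; split; exact: rk_lt.
move=> /(_ c1 c2 c3) Hc.
have -> : (alpha A l)%:R - 1 = k%:R :> R by rewrite ka -addn1 natrD addrK.
apply: (le_trans Hc); rewrite ler_pM2l; last by apply: mulr_gt0 => //; apply: exprn_gt0; rewrite ltr0n; have := c3 0%N (leq0n _); lia.
pose Q := [seq (e (nth 0 xs t), e (nth 0 xs t.+1)) | t <- iota 0 k].
pose Fq (q : (R * R) * (R * R)) := if (q.1 != q.2) && onl l q.1 && onl l q.2 then W A q.1 q.2 else 0.
have -> : \sum_(t < k) ((`|(F t.+1)%:R - (F t)%:R| + 1) * (`|(G t.+1)%:R - (G t)%:R| + 1))^-1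
   = \sum_(q <- Q) Fq q.
  rewrite big_map -(big_mkord xpredT (fun t => ((`|(F t.+1)%:R - (F t)%:R| + 1) * (`|(G t.+1)%:R - (G t)%:R| + 1))^-1 : R)) /index_iota subn0 big_seq [RHS]big_seq.
  apply: eq_bigr => t; rewrite mem_iota add0n => /andP [_ tk].
  case: (ptP t ltac:(lia)) => p1 p2 _ _; case: (ptP t.+1 ltac:(lia)) => p3 p4 _ _.
  rewrite /Fq /= p2 p4 andbT.
  have -> : e (nth 0 xs t) != e (nth 0 xs t.+1).
    apply/eqP => /(congr1 pi); rewrite !pie => eq; have := ltnth t tk; rewrite eq ltxx //.
  by rewrite /= We /dst distrC [X in (_ * (X + 1))^-1]distrC.
have E : \sum_(q <- [seq (u, v) | u <- sq A, v <- sq A]) Fq q =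
   \sum_(u <- sq A) \sum_(v <- sq A) (if (u != v) && onl l u && onl l v then W A u v else 0).
  by rewrite big_allpairs.
rewrite -E.
apply: sum_sub_uniq.
- rewrite map_inj_in_uniq ?iota_uniq // => s t; rewrite !mem_iota !add0n => /andP [_ sk] /andP [_ tk].
  case => /(congr1 pi); rewrite !pie => /eqP; rewrite nth_uniq ?sxs //; [move/eqP => //| lia | lia].
- apply: allpairs_uniq; rewrite ?sq_uniq //; by move=> [x1 x2] [y1 y2] _ _ /= [-> ->].
- move=> q /mapP [t]; rewrite mem_iota add0n => /andP [_ tk] ->.
  case: (ptP t ltac:(lia)) => p1 _ _ _; case: (ptP t.+1 ltac:(lia)) => p3 _ _ _.
  by apply/allpairsP; exists (e (nth 0 xs t), e (nth 0 xs t.+1)).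
- move=> q _; rewrite /Fq; case: ifP => // _; exact: W_ge0.
Qed.


Lemma hsum_ext m n : (m <= n)%N ->
  \sum_(0 <= d < m) (d.+1%:R : R)^-1 <= \sum_(0 <= d < n) (d.+1%:R : R)^-1.
Proof.
move=> mn; rewrite [X in _ <= X](big_cat_nat _ (n := m)) //= lerDl.
by apply: sumr_ge0 => d _; rewrite invr_ge0.
Qed.

Lemma two_sided n i : (i < n)%N ->
  \sum_(0 <= j < n) (`|i%:R - j%:R| + 1 : R)^-1 <= 2 * \sum_(0 <= d < n) (d.+1%:R : R)^-1.
Proof.
move=> iN; rewrite (big_cat_nat _ (n := i.+1)) //=.
have h1 : \sum_(0 <= j < i.+1) (`|i%:R - j%:R| + 1 : R)^-1 <= \sum_(0 <= d < n) (d.+1%:R : R)^-1.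
  apply: le_trans (hsum_ext (m := i.+1) _); last by lia.
  rewrite big_nat_rev le_eqVlt; apply/orP; left; apply/eqP; apply: eq_big_nat => j /andP [_ ji]; rewrite add0n subSS.
  rewrite natrB; last by lia.
  have -> : (i%:R - (i%:R - j%:R) : R) = j%:R by ring.
  by rewrite ger0_norm ?ler0n // natr1.
have h2 : \sum_(i.+1 <= j < n) (`|i%:R - j%:R| + 1 : R)^-1 <= \sum_(0 <= d < n) (d.+1%:R : R)^-1.
  apply: le_trans (hsum_ext (m := n - i.+1) _); last by lia.
  rewrite -{1}[i.+1]add0n big_addn; apply: ler_sum => d _.
  have -> : (i%:R - (d + i.+1)%:R : R) = - (d.+1%:R) by rewrite -addSnnS natrD; ring.
  rewrite normrN ger0_norm ?ler0n // lef_pV2 ?posrE ?ltr0n //; last by have := ler0n R d.+1; lra.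
have := lerD h1 h2; lra.
Qed.


Lemma sum_const_fset (A : {fset R}) (c : R) : \sum_(i <- A) c = #|` A|%:R * c.
Proof.
rewrite card_fset_sum1 natr_sum big_distrl /=; apply: eq_bigr => i _; by rewrite mul1r.
Qed.

Lemma rowsum (A : {fset R}) a : a \in A ->
  \sum_(b <- A) (dst A a b + 1)^-1 <= 2 * \sum_(0 <= d < #|` A|) (d.+1%:R : R)^-1.
Proof.
move=> aA.
pose g (j : nat) : R := (`|(rk A a)%:R - j%:R| + 1)^-1.
have -> : \sum_(b <- A) (dst A a b + 1)^-1 = \sum_(j <- map (rk A) A) g j by rewrite big_map.
apply: le_trans (two_sided (rk_lt aA)).
apply: sum_sub_uniq.
- rewrite map_inj_in_uniq ?fset_uniq // => x y xA yA exy.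
  case: (ltgtP x y) => // xy; [have := rk_ltr xA xy | have := rk_ltr yA xy]; rewrite exy ltnn //.
- by rewrite /index_iota iota_uniq.
- move=> j /mapP [b bA ->]; rewrite mem_index_iota leq0n /=; exact: rk_lt.
- by move=> j _; rewrite /g invr_ge0; apply: addr_ge0.
Qed.

Lemma UB (A : {fset R}) :
  \sum_(u <- sq A) \sum_(v <- sq A) (if u != v then W A u v else 0)
  <= #|` A|%:R ^+ 2 * (2 * \sum_(0 <= d < #|` A|) (d.+1%:R : R)^-1) ^+ 2.
Proof.
set M := 2 * _.
have M0 : 0 <= M by apply: mulr_ge0 => //; apply: sumr_ge0 => d _; rewrite invr_ge0.
apply: (@le_trans _ _ (\sum_(u <- sq A) \sum_(v <- sq A) W A u v)).
  apply: ler_sum => u _; apply: ler_sum => v _; case: ifP => // _; exact: W_ge0.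
rewrite /sq big_allpairs.
apply: (@le_trans _ _ (\sum_(a1 <- A) \sum_(a2 <- A) M ^+ 2)); last first.
  by rewrite !sum_const_fset mulrA -expr2.
rewrite big_seq [X in _ <= X]big_seq; apply: ler_sum => a1 a1A.
rewrite big_seq [X in _ <= X]big_seq; apply: ler_sum => a2 a2A.
rewrite big_allpairs /=.
have -> : \sum_(b1 <- A) \sum_(b2 <- A) W A (a1, a2) (b1, b2) =
   (\sum_(b1 <- A) (dst A a1 b1 + 1)^-1) * (\sum_(b2 <- A) (dst A a2 b2 + 1)^-1).
  rewrite big_distrl /=; apply: eq_bigr => b1 _; rewrite big_distrr /=; apply: eq_bigr => b2 _.
  by rewrite /W /= invfM.
rewrite expr2; apply: ler_pM; rewrite ?rowsum //; apply: sumr_ge0 => b _; rewrite invr_ge0; apply: addr_ge0 => //; exact: normr_ge0.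
Qed.


Lemma line_lower (A : {fset R}) l : is_line l -> (2 <= alpha A l)%N ->
  (alpha A l)%:R ^+ 3 <= 32 * (#|` A|%:R) ^+ 2 *
    \sum_(u <- sq A) \sum_(v <- sq A) (if (u != v) && onl l u && onl l v then W A u v else 0).
Proof.
move=> hl a2.
have key : ((alpha A l)%:R - 1) ^+ 3 <= 4 * (#|` A|%:R) ^+ 2 *
    \sum_(u <- sq A) \sum_(v <- sq A) (if (u != v) && onl l u && onl l v then W A u v else 0).
  case: (line_param hl) => [[phi [hm hphi]] | [x0 hx0]].
    apply: (@gen_lower A l fst (fun x => (x, phi x)) phi) => //; last by lia.
    - by move=> [u1 u2] _ /asboolP /hphi /= ->.
    - by move=> [u1 u2]; rewrite mem_sq /= => /andP [h1 h2] /asboolP /hphi /= <-.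
  apply: (@gen_lower A l snd (fun y => (x0, y)) (fun _ => x0)) => //; last by lia.
  - by move=> [u1 u2] _ /asboolP /hx0 /= ->.
  - by left.
  - by move=> [u1 u2]; rewrite mem_sq /= => /andP [h1 h2] /asboolP /hx0 /= <-.
  - by move=> x y; rewrite /W /= mulrC.
set S := \sum_(u <- sq A) _ in key *.
have S0 : 0 <= S.
  apply: sumr_ge0 => u _; apply: sumr_ge0 => v _; case: ifP => // _; exact: W_ge0.
have ha : (alpha A l)%:R <= 2 * ((alpha A l)%:R - 1) :> R.
  have : (2 <= (alpha A l)%:R :> R) by rewrite (ler_nat R 2). lra.
have ha0 : 0 <= (alpha A l)%:R :> R by [].
apply: (@le_trans _ _ ((2 * ((alpha A l)%:R - 1)) ^+ 3)).
  by apply: lerXn2r; rewrite ?nnegrE //; apply: le_trans ha.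
rewrite exprMn; have -> : 32 * (#|` A|%:R : R) ^+ 2 * S = 2 ^+ 3 * (4 * (#|` A|%:R) ^+ 2 * S).
  by rewrite !mulrA; congr (_ * _ * _); rewrite (_ : 2 ^+ 3 = 8) ?mulrA; [lra | rewrite !exprS expr0; lra].
by rewrite ler_pM2l ?exprn_gt0.
Qed.

Lemma sum_ind (s : seq (R * R)) (P : pred (R * R)) :
  \sum_(v <- s) (if P v then (1 : R) else 0) = (count P s)%:R.
Proof.
elim: s => [|x s IH]; first by rewrite big_nil.
rewrite big_cons IH /=; case: (P x) => /=; by rewrite ?add0r // -natr1 addrC.
Qed.


Lemma boundII (A : {fset R}) (L : seq (set (R * R))) : uniq L ->
  (forall l, l \in L -> is_line l /\ (2 <= alpha A l)%N) ->
  \sum_(l <- L) (alpha A l)%:R ^+ 3 <= 32 * (#|` A|%:R) ^+ 2 *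
     (#|` A|%:R ^+ 2 * (2 * \sum_(0 <= d < #|` A|) (d.+1%:R : R)^-1) ^+ 2).
Proof.
move=> uL hL.
apply: (@le_trans _ _ (\sum_(l <- L) 32 * (#|` A|%:R) ^+ 2 *
    \sum_(u <- sq A) \sum_(v <- sq A) (if (u != v) && onl l u && onl l v then W A u v else 0))).
  rewrite big_seq [X in _ <= X]big_seq; apply: ler_sum => l lL.
  by case: (hL l lL) => h1 h2; apply: line_lower.
rewrite -mulr_sumr; apply: ler_pM => //.
  apply: sumr_ge0 => l _; apply: sumr_ge0 => u _; apply: sumr_ge0 => v _; case: ifP => // _; exact: W_ge0.
apply: le_trans (UB A).
apply: exch => //; last by move=> u v; exact: W_ge0.
by move=> l /hL [].
Qed.

Lemma boundI (A1 A : {fset R}) (L : seq (set (R * R))) : uniq L ->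
  (forall l, l \in L -> [/\ is_line l, (2 <= alpha A l)%N & exists u1, sqset A1 u1 /\ l u1]) ->
  \sum_(l <- L) (alpha A l)%:R <= 2 * (#|` A1|%:R ^+ 2 * #|` A|%:R ^+ 2) :> R.
Proof.
move=> uL hL.
apply: (@le_trans _ _ (\sum_(l <- L) 2 *
    \sum_(u <- sq A1) \sum_(v <- sq A) (if (u != v) && onl l u && onl l v then (1 : R) else 0))).
  rewrite big_seq [X in _ <= X]big_seq; apply: ler_sum => l lL.
  case: (hL l lL) => hl a2 [u1 [[s1 s2] lu1]].
  have u1S : u1 \in sq A1 by rewrite mem_sq s1 s2.
  have ou1 : onl l u1 by apply/asboolP.
  pose P := fun v => (u1 != v) && onl l u1 && onl l v.
  apply: (@le_trans _ _ (2 * \sum_(v <- sq A) (if P v then (1 : R) else 0))); last first.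
    rewrite ler_pM2l // [X in _ <= X](bigD1_seq u1) ?sq_uniq //= lerDl.
    by apply: sumr_ge0 => u _; apply: sumr_ge0 => v _; case: ifP.
  rewrite sum_ind.
  have : (alpha A l <= 1 + count P (sq A))%N.
    rewrite alpha_count.
    apply: (@leq_trans (count (pred1 u1) (sq A) + count P (sq A))).
      rewrite -count_predUI; apply: leq_trans (leq_addr _ _); apply: sub_count => v ov /=.
      by rewrite /P ou1 ov andbT; case: (eqVneq v u1) => //= ->.
    by rewrite leq_add2r count_uniq_mem ?sq_uniq //; case: (u1 \in sq A).
  move=> h; have h2 : (alpha A l <= 2 * count P (sq A))%N by lia.
  by rewrite -natrM ler_nat.
rewrite -mulr_sumr ler_pM2l //.
apply: (@le_trans _ _ (\sum_(u <- sq A1) \sum_(v <- sq A) (if u != v then (1 : R) else 0))).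
  by apply: exch => // l /hL [].
apply: (@le_trans _ _ (\sum_(u <- sq A1) \sum_(v <- sq A) (1 : R))).
  by apply: ler_sum => u _; apply: ler_sum => v _; case: ifP.
rewrite /sq !big_allpairs.
by rewrite !sum_const_fset mulr1 !expr2 !mulrA.
Qed.

End PC.

Theorem mainTheorem3 (R : realType) :
  exists C c : R, 0 < C /\ 0 < c /\
  forall A1 A2 A3 : {fset R},
    (#|` A1 | <= #|` A2 |)%N -> (#|` A2 | <= #|` A3 |)%N ->
  forall Ai : {fset R}, Ai = A1 \/ Ai = A2 \/ Ai = A3 ->
  forall p : R, 1 <= p -> p <= 3 ->
    \sum_(l \in lines_i2 A1 A2 A3 Ai) ((alpha Ai l)%:R `^ p)
      <= C * ((#|` A1 |)%:R `^ (3 - p) * (#|` Ai |)%:R `^ (p + 1))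
           * (ln (2 + (#|` A3 |)%:R)) `^ c.
Proof.
have l20 : 0 < ln (2 : R) by apply: ln_gt0; lra.
have C0 : 0 < 1152 + 2 / ln (2 : R) ^+ 2.
  apply: addr_gt0; first by rewrite (ltr0n R 1152).
  by apply: divr_gt0; [rewrite (ltr0n R 2) | exact: exprn_gt0].
exists (1152 + 2 / ln 2 ^+ 2), 2; split; first exact: C0.
split; first by rewrite (ltr0n R 2).
move=> A1 A2 A3 h12 h23 Ai hAi p p1 p3.
have mn : (#|` A1| <= #|` Ai|)%N by case: hAi => [->|[->|->]] //; lia.
have nN : (#|` Ai| <= #|` A3|)%N by case: hAi => [->|[->|->]] //; lia.
set C := 1152 + _.
set L3 := ln (2 + (#|` A3|)%:R).
have L3ge : ln 2 <= L3.
  by rewrite /L3 ler_ln ?posrE //; have := ler0n R #|` A3|; lra.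
have L30 : 0 < L3 by apply: lt_le_trans L3ge.
have rhs0 : 0 <= C * ((#|` A1|)%:R `^ (3 - p) * (#|` Ai|)%:R `^ (p + 1)) * L3 `^ 2.
  by apply: mulr_ge0; [apply: mulr_ge0; [exact: ltW | apply: mulr_ge0]|]; exact: powR_ge0.
case: finite_supportP => [_|X XP _ _]; first by rewrite big_nil.
have hX : forall l, l \in X -> [/\ is_line l, (2 <= alpha Ai l)%N & exists u1, sqset A1 u1 /\ l u1].
  move=> l lX; case: (XP l lX) => [[hl [u1 [u2 [u3 [s1 s2 s3 [lu1 lu2 lu3] _]]]]] a2].
  by split => //; exists u1.
case: (posnP #|` A1|) => [m0|m0].
  rewrite big_seq big1 // => l lX; case: (hX l lX) => _ _ [u1 [[s1 _] _]].
  exfalso; have : (0 < #|` A1|)%N.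
    by rewrite cardfs_gt0; apply/eqP => e; move: s1; rewrite e inE.
  by rewrite m0.
have n0 : (0 < #|` Ai|)%N by lia.
set a : R := (#|` A1|)%:R; set b : R := (#|` Ai|)%:R.
have a0 : 0 < a by rewrite /a ltr0n.
have b0 : 0 < b by rewrite /b ltr0n.
set T := b / a.
have T0 : 0 < T by apply: divr_gt0.
have uX : uniq X := fset_uniq X.
apply: (@le_trans _ _ (\sum_(l <- X) (T `^ (p - 1) * (alpha Ai l)%:R + T `^ (p - 3) * (alpha Ai l)%:R ^+ 3))).
  by apply: ler_sum => l _; apply: pow_interp.
rewrite big_split /= -!mulr_sumr.
have hI := boundI uX hX.
have hII := boundII uX (fun l lX => let: And3 h1 h2 _ := hX l lX in conj h1 h2).
have hH : \sum_(0 <= d < #|` Ai|) (d.+1%:R : R)^-1 <= 3 * L3.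
  rewrite (big_mkord xpredT (fun d => (d.+1%:R : R)^-1)).
  apply: le_trans (harm_le R #|` Ai|) _.
  rewrite ler_pM2l // ler_ln ?posrE; first by rewrite lerD2l ler_nat.
    by have := ler0n R #|` Ai|; lra.
  by have := ler0n R #|` A3|; lra.
set H := \sum_(0 <= d < #|` Ai|) _ in hII hH.
have H0 : 0 <= H by apply: sumr_ge0 => d _; rewrite invr_ge0.
set Q := a `^ (3 - p) * b `^ (p + 1).
have Q0 : 0 <= Q by apply: mulr_ge0; apply: powR_ge0.
have e1 := @ident1 R a b p a0 b0.
have e2 := @ident2 R a b p a0 b0.
rewrite -/T -/Q in e1 e2.
have s1 : T `^ (p - 1) * \sum_(l <- X) (alpha Ai l)%:R <= 2 * Q.
  apply: (@le_trans _ _ (T `^ (p - 1) * (2 * (a ^+ 2 * b ^+ 2)))).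
    by apply: ler_wpM2l; [exact: powR_ge0| exact: hI].
  by rewrite mulrCA e1.
have s2 : T `^ (p - 3) * \sum_(l <- X) (alpha Ai l)%:R ^+ 3 <= 1152 * Q * L3 ^+ 2.
  apply: (@le_trans _ _ (T `^ (p - 3) * (32 * b ^+ 2 * (b ^+ 2 * (6 * L3) ^+ 2)))).
    apply: ler_wpM2l; first exact: powR_ge0.
    apply: le_trans hII _.
    apply: ler_wpM2l; first by apply: mulr_ge0 => //; apply: exprn_ge0; exact: ltW.
    apply: ler_wpM2l; first by apply: exprn_ge0; exact: ltW.
    apply: lerXn2r; rewrite ?nnegrE; [by apply: mulr_ge0 | by apply: mulr_ge0 => //; exact: ltW | lra].
  have -> : T `^ (p - 3) * (32 * b ^+ 2 * (b ^+ 2 * (6 * L3) ^+ 2)) = 1152 * (T `^ (p - 3) * b ^+ 4) * L3 ^+ 2.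
    by rewrite !exprMn; ring.
  by rewrite e2.
rewrite (powR_mulrn 2); last exact: ltW.
have hL : 2 <= 2 / ln 2 ^+ 2 * L3 ^+ 2.
  rewrite mulrAC ler_pdivlMr ?exprn_gt0 //.
  rewrite ler_pM2l //; apply: lerXn2r; rewrite ?nnegrE //; exact: ltW.
have : 2 * Q <= 2 / ln 2 ^+ 2 * L3 ^+ 2 * Q by rewrite ler_wpM2r.
rewrite /C; move: s1 s2; set U := T `^ (p - 1) * _; set V := T `^ (p - 3) * _.
move=> s1 s2 s3.
have -> : (1152 + 2 / ln 2 ^+ 2) * Q * L3 ^+ 2 = 1152 * Q * L3 ^+ 2 + 2 / ln 2 ^+ 2 * L3 ^+ 2 * Q by ring.
lra.
Qed.
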